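(* Let $G$ be a finite abelian group of order $n$ and $S\subset G^n$ the set of bijections $\{1,\dots,n\}\to G$. If $\chi\in\hat G^n$ has exactly $m$ nontrivial coordinates, where $m\le n/2$, then \[ |\widehat{1_S}(\chi)|\le \binom{n}{m}^{-1/2}\frac{n!}{n^n}. \]
   Context: $\hat G$ is the dual group of $G$. For $\chi=(\chi_1,\dots,\chi_n)\in\hat G^n$, $\widehat{1_S}(\chi)=\frac{1}{n^n}\sum_{\pi\in S}\prod_{i=1}^n\chi_i(\pi(i))$. *)

(* Defs.v *)
From mathcomp Require Import all_boot all_order all_algebra all_field.
Set Implicit Arguments. Unset Strict Implicit. Unset Printing Implicit Defensive.
Import Order.TTheory GRing.Theory Num.Theory.
Local Open Scope ring_scope.

(* A finite abelian group G is modelled as a finZmodType (written additively).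
   The dual group: characters = homomorphisms G -> C^x, with C = algC. *)
Definition is_character (G : finZmodType) (chi : G -> algC) : Prop :=
  chi 0 = 1 /\ forall x y : G, chi (x + y) = chi x * chi y.

Definition trivial_char (G : finZmodType) (chi : G -> algC) : bool :=
  [forall x : G, chi x == 1].

Definition is_bij (G : finZmodType) (n : nat) (pi : {ffun 'I_n -> G}) : bool :=
  injectiveb pi && [forall g : G, exists i : 'I_n, pi i == g].

Definition hat1S (G : finZmodType) (n : nat) (chi : 'I_n -> G -> algC) : algC :=
  (n%:R ^+ n)^-1 * \sum_(pi : {ffun 'I_n -> G} | is_bij pi) \prod_(i < n) chi i (pi i).

(* Main.v *)
Require Import Defs.
From mathcomp Require Import all_boot all_order all_algebra all_field.
From mathcomp Require Import fingroup perm zify ring lra.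
Import Order.TTheory GRing.Theory Num.Theory.
Local Open Scope ring_scope.
Set Implicit Arguments. Unset Strict Implicit. Unset Printing Implicit Defensive.

Section S.
Variable G : finZmodType.

Definition PP (k : nat) (c : 'I_k -> G -> algC) : algC :=
  \sum_(f : {ffun 'I_k -> G} | injectiveb f) \prod_(i < k) c i (f i).

Lemma PP_ext k (c c' : 'I_k -> G -> algC) : (forall i x, c i x = c' i x) -> PP c = PP c'.
Proof. by move=> h; apply: eq_bigr => f _; apply: eq_bigr => i _; rewrite h. Qed.

Lemma PP_perm k (c : 'I_k -> G -> algC) (s : {perm 'I_k}) :
  PP (fun i => c (s i)) = PP c.
Proof.
rewrite /PP (reindex (fun f : {ffun 'I_k -> G} => [ffun i => f (s i)])) /=.
  apply: eq_big => f.
    apply/injectiveP/injectiveP => hf x y.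
      move=> e; apply: (perm_inj (s := s^-1%g)); apply: hf; by rewrite !ffunE !permKV.
    by rewrite !ffunE => /hf /perm_inj.
  move=> _; rewrite [RHS](reindex_inj (perm_inj (s := s))) /=.
  by apply: eq_bigr => i _; rewrite ffunE.
exists (fun f : {ffun 'I_k -> G} => [ffun i => f (s^-1%g i)]) => f _;
  by apply/ffunP => i; rewrite !ffunE ?permK ?permKV.
Qed.

Definition ext k (f : {ffun 'I_k -> G}) (g : G) : {ffun 'I_k.+1 -> G} :=
  [ffun i => if unlift ord_max i is Some j then f j else g].

Lemma ext_lift k (f : {ffun 'I_k -> G}) g j : ext f g (lift ord_max j) = f j.
Proof. by rewrite ffunE liftK. Qed.

Lemma ext_max k (f : {ffun 'I_k -> G}) g : ext f g ord_max = g.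
Proof. by rewrite ffunE unlift_none. Qed.

Lemma inj_ext k (f : {ffun 'I_k -> G}) g :
  injectiveb (ext f g) = injectiveb f && (g \notin [set f j | j : 'I_k]).
Proof.
apply/injectiveP/andP.
  move=> h; split.
    apply/injectiveP => x y e; apply: (lift_inj (h := ord_max)); apply: h.
    by rewrite !ext_lift.
  apply/negP => /imsetP [j _ e].
  have := h ord_max (lift ord_max j); rewrite ext_max ext_lift => /(_ e) e'.
  by move/eqP: e'; rewrite (negbTE (neq_lift _ _)).
case=> /injectiveP hf hg x y.
case: (unliftP ord_max x) => [x'|] ->; case: (unliftP ord_max y) => [y'|] ->;
  rewrite ?ext_lift ?ext_max //.
- by move=> /hf ->.
- by move=> e; case/negP: hg; rewrite -e; apply: imset_f.
- by move=> e; case/negP: hg; rewrite e; apply: imset_f.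
Qed.

Lemma split_sum k (H : {ffun 'I_k.+1 -> G} -> algC) :
  \sum_(F : {ffun 'I_k.+1 -> G} | injectiveb F) H F =
  \sum_(f : {ffun 'I_k -> G} | injectiveb f)
     \sum_(g | g \notin [set f j | j : 'I_k]) H (ext f g).
Proof.
rewrite pair_big_dep (reindex (fun p : {ffun 'I_k -> G} * G => ext p.1 p.2)) /=.
  by apply: eq_bigl => p; rewrite inj_ext.
exists (fun F : {ffun 'I_k.+1 -> G} => ([ffun j => F (lift ord_max j)], F ord_max)).
  by case=> f g _ /=; rewrite ext_max; congr pair; apply/ffunP => j; rewrite !ffunE liftK.
move=> F _ /=; apply/ffunP => i; rewrite ffunE.
by case: (unliftP ord_max i) => [j|] ->; rewrite ?ffunE.
Qed.

Lemma prod_ext k (c : 'I_k.+1 -> G -> algC) (f : {ffun 'I_k -> G}) g :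
  \prod_(i < k.+1) c i (ext f g i) =
  (\prod_(i < k) c (lift ord_max i) (f i)) * c ord_max g.
Proof.
rewrite big_ord_recr /= ext_max; congr (_ * _); apply: eq_bigr => i _.
have -> : widen_ord (leqnSn k) i = lift ord_max i by apply: val_inj; rewrite /= /bump leqNgt ltn_ord.
by rewrite ext_lift.
Qed.

Lemma char_sum0 (chi : G -> algC) : is_character chi -> ~~ trivial_char chi ->
  \sum_g chi g = 0.
Proof.
case=> h0 hM /forallPn [h /eqP hh].
have e : \sum_g chi g = chi h * \sum_g chi g.
  rewrite mulr_sumr (reindex_inj (addrI h)) /=.
  by apply: eq_bigr => g _; rewrite hM.
have : (1 - chi h) * \sum_g chi g = 0 by rewrite mulrBl mul1r -e subrr.
move/eqP; rewrite mulf_eq0 subr_eq0 => /orP [/eqP e1|/eqP //].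
by case: hh; rewrite -e1.
Qed.

Lemma char_mul (a b : G -> algC) : is_character a -> is_character b ->
  is_character (fun x => a x * b x).
Proof.
case=> a0 aM [b0 bM]; split; first by rewrite a0 b0 mulr1.
by move=> x y; rewrite aM bM mulrACA.
Qed.

Lemma char_one : is_character (fun _ : G => 1).
Proof. by split => // x y; rewrite mulr1. Qed.

Lemma PP_triv_last k (c : 'I_k.+1 -> G -> algC) : (forall x, c ord_max x = 1) ->
  PP c = (#|G| - k)%:R * PP (fun i => c (lift ord_max i)).
Proof.
move=> h; rewrite /PP split_sum mulr_sumr; apply: eq_bigr => f /injectiveP hf.
under eq_bigr do rewrite prod_ext h mulr1.
rewrite sumr_const mulrC mulr_natr; congr (_ *+ _).
have := cardC [set f j | j : 'I_k]; rewrite card_imset // card_ord => <-.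
by rewrite addKn; apply: eq_card => g; rewrite !inE.
Qed.

Lemma PP_nontriv_last k (c : 'I_k.+1 -> G -> algC) :
  is_character (c ord_max) -> ~~ trivial_char (c ord_max) ->
  PP c = - \sum_(j < k) PP (fun i x => c (lift ord_max i) x * (if i == j then c ord_max x else 1)).
Proof.
move=> hc hn; rewrite /PP split_sum exchange_big -sumrN /=; apply: eq_bigr => f /injectiveP hf.
under eq_bigr do rewrite prod_ext.
rewrite -mulr_sumr.
have e : \sum_(g | g \notin [set f j | j : 'I_k]) c ord_max g = - \sum_(j < k) c ord_max (f j).
  have := char_sum0 hc hn.
  rewrite (bigID (mem [set f j | j : 'I_k])) /= big_imset /=; last by move=> x y _ _; apply: hf.
  by move/eqP; rewrite addrC addr_eq0 => /eqP.
rewrite e mulrN mulr_sumr; congr (- _); apply: eq_bigr => j _.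
rewrite big_split /=; congr (_ * _).
by rewrite -big_mkcond big_pred1_eq.
Qed.

Definition cnt k (c : 'I_k -> G -> algC) : nat := \sum_(i < k) (~~ trivial_char (c i) : nat).

Definition tt m : algC := sqrtC ((m`! * #|G| ^_ m)%:R).

Lemma trivE (chi : G -> algC) : trivial_char chi -> forall x, chi x = 1.
Proof. by move=> /forallP h x; apply/eqP. Qed.

Lemma cnt_perm k (c : 'I_k -> G -> algC) (s : {perm 'I_k}) : cnt (fun i => c (s i)) = cnt c.
Proof. by rewrite /cnt [RHS](reindex_inj (perm_inj (s := s))). Qed.

Lemma cnt_lift k (c : 'I_k.+1 -> G -> algC) : trivial_char (c ord_max) ->
  cnt (fun i => c (lift ord_max i)) = cnt c.
Proof.
move=> h; rewrite /cnt big_ord_recr /= h addn0; apply: eq_bigr => i _.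
have -> : widen_ord (leqnSn k) i = lift ord_max i by apply: val_inj; rewrite /= /bump leqNgt ltn_ord.
by [].
Qed.

Lemma cnt_le k (c : 'I_k -> G -> algC) : (cnt c <= k)%N.
Proof.
rewrite /cnt -[X in (_ <= X)%N]card_ord -sum1_card.
by apply: leq_sum => i _; case: (~~ _).
Qed.

Lemma cnt_D1 k (c : 'I_k -> G -> algC) j : (forall i, i != j -> ~~ trivial_char (c i)) ->
  cnt c = ((~~ trivial_char (c j)) + k.-1)%N.
Proof.
move=> h; rewrite /cnt (bigD1 j) //=; congr (_ + _)%N.
rewrite -[k in RHS]card_ord -(cardC1 j) -sum1_card; apply: eq_big => i //.
by move=> hi; rewrite h.
Qed.

Lemma cnt_all k (c : 'I_k -> G -> algC) : (forall i, ~~ trivial_char (c i)) -> cnt c = k.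
Proof.
move=> h; rewrite /cnt -[k in RHS]card_ord -sum1_card.
by apply: eq_bigr => i _; rewrite h.
Qed.

Lemma sqrt_le (a x y : nat) : (a * a * x <= y)%N -> a%:R * sqrtC x%:R <= sqrtC (y%:R : algC).
Proof.
move=> h.
rewrite -[a%:R](@sqrCK _ (a%:R : algC)) ?ler0n // -sqrtCM ?qualifE /= ?exprn_ge0 ?ler0n //.
rewrite ler_sqrtC ?qualifE /= ?mulr_ge0 ?exprn_ge0 ?ler0n //.
by rewrite -natrX -natrM ler_nat expnS expn1.
Qed.

Lemma ineq1 k n : (2 * k.+2 <= n)%N ->
  (k.+1 * k.+1 * (k.+1`! * n ^_ k.+1) <= k.+2`! * n ^_ k.+2)%N.
Proof.
move=> h; rewrite [in X in (_ <= X)%N]factS [in X in (_ <= X)%N]ffactnSr.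
move: (k.+1`!) (n ^_ k.+1) => A B.
have h2 : (k.+1 * k.+1 <= k.+2 * (n - k.+1))%N by nia.
have := leq_mul (leqnn (A * B)) h2.
nia.
Qed.

Lemma ineq2 k n : (2 * k.+2 <= n)%N ->
  (k.+1 * (n - k) * (k.+1 * (n - k)) * (k`! * n ^_ k) <= k.+2`! * n ^_ k.+2)%N.
Proof.
move=> h; rewrite [in X in (_ <= X)%N]factS [in X in (_ <= X)%N]ffactnSr.
rewrite [in X in (_ <= X)%N]factS [in X in (_ <= X)%N]ffactnSr.
move: (k`!) (n ^_ k) => A B.
have h2 : (k.+1 * (n - k) <= k.+2 * (n - k.+1))%N by nia.
have := leq_mul (leqnn (A * B * k.+1 * (n - k))) h2.
nia.
Qed.

Lemma PP0 (c : 'I_0 -> G -> algC) : PP c = 1.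
Proof.
rewrite /PP (big_pred1 [ffun i : 'I_0 => 0]) ?big_ord0 //.
move=> f /=; apply/injectiveP/eqP.
  by move=> _; apply/ffunP => -[].
by move=> _ [].
Qed.

Lemma main K : forall k, (k < K)%N -> forall c : 'I_k -> G -> algC,
  (forall i, is_character (c i)) -> (2 * cnt c <= #|G|)%N -> (k <= #|G|)%N ->
  `|PP c| <= ((#|G| - cnt c) ^_ (k - cnt c))%:R * tt (cnt c).
Proof.
elim: K => // K IH k hk c hc hcnt hkn.
case: (pickP (fun i => trivial_char (c i))) => [j hj | hall].
  case: k c hc hcnt hkn hk j hj => [c _ _ _ _ []//|k] c hc hcnt hkn hk j hj.
  pose s := tperm j ord_max.
  pose c2 := fun i => c (s i).
  have e1 : PP c = PP c2 by rewrite /c2 PP_perm.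
  have h2 : trivial_char (c2 ord_max) by rewrite /c2 tpermR.
  have e2 := PP_triv_last (trivE h2).
  have ecnt : cnt (fun i => c2 (lift ord_max i)) = cnt c by rewrite cnt_lift // /c2 cnt_perm.
  have hle := cnt_le (fun i => c2 (lift ord_max i)); rewrite ecnt in hle.
  have := IH k (leq_trans (ltnSn _) hk) (fun i => c2 (lift ord_max i)) (fun i => hc _).
  rewrite ecnt => /(_ hcnt (ltnW hkn)) hb.
  rewrite e1 e2 normrM normr_nat.
  rewrite subSn // ffactnSr natrM [_ * _%:R]mulrC -mulrA.
  have -> : (#|G| - cnt c - (k - cnt c))%N = (#|G| - k)%N by lia.
  by rewrite ler_pM2l // ltr0n subn_gt0.
have hnt : forall i, ~~ trivial_char (c i) by move=> i; rewrite hall.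
rewrite (cnt_all hnt) subnn ffactn0 mul1r.
rewrite (cnt_all hnt) in hcnt.
case: k hk c hc hcnt hkn hall hnt => [|[|k]] hk c hc hcnt hkn hall hnt.
- by rewrite PP0 /tt fact0 ffactn0 sqrtC1 normr1.
- rewrite PP_nontriv_last // big_ord0 oppr0 normr0.
  by rewrite /tt sqrtC_ge0 ler0n.
rewrite PP_nontriv_last // normrN.
pose c' (j : 'I_k.+1) := (fun i x => c (lift ord_max i) x * (if i == j then c ord_max x else 1)).
have hb : forall j, k.+1%:R * `|PP (c' j)| <= tt k.+2.
  move=> j.
  have hc' : forall i, is_character (c' j i).
    move=> i; apply: char_mul => //; case: (i == j) => //; exact: char_one.
  have hothers : forall i, i != j -> ~~ trivial_char (c' j i).
    move=> i /negbTE hij; rewrite /c'; rewrite hij.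
    apply: contra (hnt (lift ord_max i)) => /forallP h; apply/forallP => x.
    by have := h x; rewrite mulr1.
  have ecnt := cnt_D1 hothers.
  have hlt : (k.+1 < K)%N by [].
  have hle := cnt_le (c' j).
  have h2c : (2 * cnt (c' j) <= #|G|)%N by lia.
  have := IH k.+1 hlt (c' j) hc' h2c (ltnW hkn).
  rewrite ecnt /=.
  case: (boolP (trivial_char (c' j j))) => htj /=.
  - rewrite add0n subSnn ffactn1 => hP.
    apply: le_trans (ler_wpM2l (ler0n _ _) hP) _.
    rewrite mulrA -natrM /tt; apply: sqrt_le; exact: ineq2.
  - rewrite add1n subnn ffactn0 mul1r => hP.
    apply: le_trans (ler_wpM2l (ler0n _ _) hP) _.
    rewrite /tt; apply: sqrt_le; exact: ineq1.
have hk0 : (0 : algC) < k.+1%:R by rewrite ltr0n.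
rewrite -(ler_pM2l hk0); apply: le_trans (ler_wpM2l (ltW hk0) (ler_norm_sum _ _ _)) _.
rewrite mulr_sumr; apply: le_trans (ler_sum _ (fun j _ => hb j)) _.
by rewrite sumr_const card_ord mulr_natl.
Qed.
End S.

Theorem lemma4p1 (G : finZmodType) (n : nat) (hn : #|G| = n)
  (chi : 'I_n -> G -> algC) (hchi : forall i, is_character (chi i))
  (m : nat)
  (hm : #|[set i : 'I_n | ~~ trivial_char (chi i)]| = m)
  (hmn : (2 * m <= n)%N) :
  `|hat1S chi| <= (sqrtC ('C(n, m))%:R)^-1 * ((n`!)%:R / (n%:R ^+ n)).
Proof.
have hn0 : (0 < n)%N by rewrite -hn; apply/card_gt0P; exists 0.
have ecnt : cnt chi = m.
  rewrite -hm -sum1_card big_mkcond /cnt; apply: eq_bigr => i _; rewrite inE.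
  by case: (~~ _).
have eh : hat1S chi = (n%:R ^+ n)^-1 * PP chi.
  rewrite /hat1S /PP; congr (_ * _); apply: eq_bigl => f.
  rewrite /is_bij; case: (boolP (injectiveb f)) => //= /injectiveP hf.
  apply/forallP => g; apply/existsP.
  have : g \in codom f by apply: inj_card_onto => //; rewrite card_ord hn.
  by case/codomP => x ->; exists x.
have hb := main (ltnSn n) hchi.
rewrite ecnt hn in hb; have {hb} := hb hmn (leqnn n).

rewrite ffactnn /tt hn => hb.
have hmn' : (m <= n)%N by lia.
have hC : (0 : algC) < sqrtC 'C(n, m)%:R by rewrite sqrtC_gt0 ltr0n bin_gt0.
have E : (n`!)%:R = ((n - m)`!)%:R * sqrtC ((m`! * n ^_ m)%:R) * sqrtC 'C(n, m)%:R :> algC.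
  rewrite -mulrA -sqrtCM ?qualifE /= ?ler0n // -natrM.
  have -> : (m`! * n ^_ m * 'C(n, m) = (n ^_ m) ^ 2)%N.
    by rewrite -bin_ffact expnS expn1; nia.
  by rewrite natrX sqrCK ?ler0n // -natrM mulnC ffact_fact.
rewrite eh normrM ger0_norm; last by rewrite invr_ge0 exprn_ge0 ?ler0n.
rewrite E.
set s := sqrtC ('C(n, m))%:R; set X := ((n - m)`!%:R * sqrtC (m`! * n ^_ m)%:R).
have hs : s != 0 by rewrite gt_eqF.
have hN : (n%:R : algC) != 0 by rewrite pnatr_eq0 -lt0n.
have -> : s^-1 * (X * s / n%:R ^+ n) = (n%:R ^+ n)^-1 * X.
  by field; rewrite hs expf_neq0.
by rewrite ler_pM2l // invr_gt0 exprn_gt0 // ltr0n.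
Qed.
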